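(* Let $C$ be a normal, closed cone with nonempty interior in a real Banach space. If $f:\operatorname{int} C\to\operatorname{int} C$ is $\tau$-condensing, then $\alpha f+(1-\alpha)\operatorname{id}$ is $\tau$-condensing for every $0<\alpha<1$.
   Context: A closed cone $C$ (closed convex, $\lambda C\subseteq C$ for $\lambda\ge0$, $C\cap(-C)=\{0\}$) induces the order $x\le y$ iff $y-x\in C$. $C$ is normal if there is $\kappa$ with $\|x\|\le\kappa\|y\|$ whenever $0\le x\le y$. Thompson's metric on $\operatorname{int}C$: $d_T(x,y)=\log\inf\{\beta\ge1:\beta^{-1}x\le y\le\beta x\}$. For a $d_T$-bounded set $A\subseteq\operatorname{int}C$, $\tau(A)=\inf\{d>0: A$ has a finite cover by sets of $d_T$-diameter $\le d\}$. A continuous map $f:D\to\operatorname{int}C$ ($D\subseteq\operatorname{int}C$) is $\tau$-condensing if $\tau(f(A))<\tau(A)$ for every $d_T$-bounded $A\subseteq D$ with $\tau(A)>0$. *)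

(* Defs.v *)
From HB Require Import structures.
From mathcomp Require Import all_boot all_order all_algebra.
From mathcomp Require Import all_classical all_reals all_analysis.
Set Implicit Arguments. Unset Strict Implicit. Unset Printing Implicit Defensive.
Import Order.TTheory GRing.Theory Num.Theory.
Import numFieldNormedType.Exports.
Local Open Scope classical_set_scope.
Local Open Scope ring_scope.

Section Thompson.
Variables (R : realType) (V : normedModType R).

Definition closed_cone (C : set V) : Prop :=
  [/\ closed C,
      (forall x y (t : R), C x -> C y -> 0 <= t -> t <= 1 ->
         C (t *: x + (1 - t) *: y)),
      (forall (l : R) x, 0 <= l -> C x -> C (l *: x)) &
      (forall x, C x -> C (- x) -> x = 0)].

Definition cone_le (C : set V) (x y : V) : Prop := C (y - x).

Definition normal_cone (C : set V) : Prop :=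
  exists kappa : R, forall x y : V,
    cone_le C 0 x -> cone_le C x y -> `|x| <= kappa * `|y|.

Definition thompson (C : set V) (x y : V) : R :=
  ln (inf [set b : R | 1 <= b /\ cone_le C (b^-1 *: x) y /\ cone_le C y (b *: x)]).

Definition dT_bounded (C : set V) (A : set V) : Prop :=
  exists M : R, forall x y, A x -> A y -> thompson C x y <= M.

Definition has_finite_cover (C : set V) (A : set V) (d : R) : Prop :=
  exists (n : nat) (B : 'I_n -> set V),
    [/\ (forall i, B i `<=` interior C),
        (forall a, A a -> exists i, B i a) &
        (forall i x y, B i x -> B i y -> thompson C x y <= d)].

(* Kuratowski-type measure of noncompactness w.r.t. d_T (extended-real
   valued; +oo when no finite cover exists). *)
Definition tau (C : set V) (A : set V) : \bar R :=
  ereal_inf [set d%:E | d in [set d : R | 0 < d /\ has_finite_cover C A d]].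

Definition dT_continuous_on (C : set V) (D : set V) (f : V -> V) : Prop :=
  forall x, D x -> forall e : R, 0 < e -> exists2 del : R, 0 < del &
    forall y, D y -> thompson C x y < del -> thompson C (f x) (f y) < e.

Definition tau_condensing (C : set V) (D : set V) (f : V -> V) : Prop :=
  [/\ (forall x, D x -> interior C (f x)),
      dT_continuous_on C D f &
      (forall A, A `<=` D -> dT_bounded C A -> (0 < tau C A)%E ->
         (tau C (f @` A) < tau C A)%E)].

End Thompson.

(* Main.v *)
Require Import Defs.
From HB Require Import structures.
From mathcomp Require Import all_boot all_order all_algebra.
From mathcomp Require Import all_classical all_reals all_analysis.
From mathcomp Require Import ring lra.
Import Order.TTheory GRing.Theory Num.Theory.
Import numFieldNormedType.Exports.
Local Open Scope classical_set_scope.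
Local Open Scope ring_scope.

Ltac lin R u v x y :=
  let F := fresh "F" in let FD := fresh "FD" in let FZ := fresh "FZ" in let FN := fresh "FN" in
  let Eu := fresh "Eu" in let Ev := fresh "Ev" in let Ex := fresh "Ex" in let Ey := fresh "Ey" in
  pose F := fun a b c d : R => a*:u + b*:v + c*:x + d*:y;
  have FD : forall a b c d a' b' c' d', F a b c d + F a' b' c' d' = F (a+a') (b+b') (c+c') (d+d')
    ; first (by move=> *; rewrite /F !scalerDl addrACA; congr (_ + _); rewrite addrACA; congr (_+_); rewrite addrACA);
  have FZ : forall k a b c d, k *: F a b c d = F (k*a) (k*b) (k*c) (k*d)
    ; first (by move=> *; rewrite /F !scalerDr !scalerA);
  have FN : forall a b c d, - F a b c d = F (-a) (-b) (-c) (-d)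
    ; first (by move=> *; rewrite /F !opprD !scaleNr);
  have Eu : u = F 1 0 0 0 ; first (by rewrite /F scale1r !scale0r !addr0);
  have Ev : v = F 0 1 0 0 ; first (by rewrite /F scale1r !scale0r addr0 add0r addr0);
  have Ex : x = F 0 0 1 0 ; first (by rewrite /F scale1r !scale0r !add0r addr0);
  have Ey : y = F 0 0 0 1 ; first (by rewrite /F scale1r !scale0r !add0r);
  rewrite Eu Ev Ex Ey; clear Eu Ev Ex Ey; rewrite !(FZ, FN, FD); clear FZ FN FD; congr F.

Lemma test (R : realType) (V : normedModType R) (u v x y : V) (al b1 b2 K : R) :
  K != 0 ->
  (b2 - al*(b2-b1)/K) *: (al*:u + (1-al)*:x) - (al*:v + (1-al)*:y)
  = al*:(b1*:u - v) + (1-al)*:(b2*:x - y) + (al*(b2-b1))*:(u - K^-1 *: (al*:u + (1-al)*:x)).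
Proof. move=> K0. lin R u v x y; field; exact K0. Qed.

Ltac lin2 R u v :=
  let F := fresh "F" in let FD := fresh "FD" in let FZ := fresh "FZ" in let FN := fresh "FN" in
  let Eu := fresh "Eu" in let Ev := fresh "Ev" in
  pose F := fun a b : R => a*:u + b*:v;
  have FD : forall a b a' b', F a b + F a' b' = F (a+a') (b+b')
    ; first (by move=> *; rewrite /F !scalerDl addrACA);
  have FZ : forall k a b, k *: F a b = F (k*a) (k*b)
    ; first (by move=> *; rewrite /F !scalerDr !scalerA);
  have FN : forall a b, - F a b = F (-a) (-b)
    ; first (by move=> *; rewrite /F !opprD !scaleNr);
  have Eu : u = F 1 0 ; first (by rewrite /F scale1r !scale0r !addr0);
  have Ev : v = F 0 1 ; first (by rewrite /F scale1r !scale0r add0r);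
  rewrite Eu Ev; clear Eu Ev; rewrite !(FZ, FN, FD); clear FZ FN FD; congr F.

Ltac lin3 R u v x :=
  let F := fresh "F" in let FD := fresh "FD" in let FZ := fresh "FZ" in let FN := fresh "FN" in
  let Eu := fresh "Eu" in let Ev := fresh "Ev" in let Ex := fresh "Ex" in
  pose F := fun a b c : R => a*:u + b*:v + c*:x;
  have FD : forall a b c a' b' c', F a b c + F a' b' c' = F (a+a') (b+b') (c+c')
    ; first (by move=> *; rewrite /F !scalerDl addrACA; congr (_ + _); rewrite addrACA);
  have FZ : forall k a b c, k *: F a b c = F (k*a) (k*b) (k*c)
    ; first (by move=> *; rewrite /F !scalerDr !scalerA);
  have FN : forall a b c, - F a b c = F (-a) (-b) (-c)
    ; first (by move=> *; rewrite /F !opprD !scaleNr);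
  have Eu : u = F 1 0 0 ; first (by rewrite /F scale1r !scale0r !addr0);
  have Ev : v = F 0 1 0 ; first (by rewrite /F scale1r !scale0r addr0 add0r);
  have Ex : x = F 0 0 1 ; first (by rewrite /F scale1r !scale0r !add0r);
  rewrite Eu Ev Ex; clear Eu Ev Ex; rewrite !(FZ, FN, FD); clear FZ FN FD; congr F.

Section Aux.
Variables (R : realType) (V : normedModType R) (C : set V).
Hypothesis hC : closed_cone C.

Lemma int_ball (x : V) :
  interior C x <-> exists2 r : R, 0 < r & forall z, `|x - z| < r -> C z.
Proof.
rewrite /interior /= nbhs_ballP; split.
- move=> [r r0 H]; exists r => // z zr; apply: H; by rewrite -ball_normE /ball_ /=.
- move=> [r r0 H]; exists r => // z; rewrite -ball_normE /ball_ /=; exact: H.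
Qed.

Lemma Cconv x y (t : R) : C x -> C y -> 0 <= t -> t <= 1 -> C (t *: x + (1 - t) *: y).
Proof. by case: hC => _ H _ _; apply: H. Qed.

Lemma Cscale (l : R) x : 0 <= l -> C x -> C (l *: x).
Proof. by case: hC => _ _ H _; apply: H. Qed.

Lemma Cadd x y : C x -> C y -> C (x + y).
Proof.
move=> Cx Cy.
have H : C (2^-1 *: x + (1 - 2^-1) *: y).
  by apply: Cconv => //; rewrite invf_le1 ?ler1n.
have -> : x + y = 2 *: (2^-1 *: x + (1 - 2^-1) *: y).
  by rewrite scalerDr !scalerA mulfV ?pnatr_eq0 // scale1r
       (_ : 1 - 2^-1 = 2^-1 :> R) ?mulfV ?pnatr_eq0 ?scale1r //; field.
by apply: Cscale.
Qed.

Lemma Cint x : interior C x -> C x.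
Proof. exact: interior_subset. Qed.

Lemma int_conv x y (t : R) : interior C x -> interior C y -> 0 < t -> t <= 1 ->
  interior C (t *: x + (1 - t) *: y).
Proof.
move=> /int_ball [r r0 Hr] /Cint Cy t0 t1; apply/int_ball.
exists (t * r); first by rewrite mulr_gt0.
move=> z hz.
have -> : z = t *: (x - t^-1 *: (t *: x + (1 - t) *: y - z)) + (1 - t) *: y.
  rewrite scalerBr scalerA mulfV ?gt_eqF // scale1r.
  by rewrite opprB addrC addrA [_ + t *: x]addrC subrKC.
apply: Cconv => //; last exact: ltW.
apply: Hr; rewrite opprB addrC subrK normrZ gtr0_norm ?invr_gt0 //.
by rewrite ltr_pdivrMl // .
Qed.


Definition Sb x y := [set b : R | 1 <= b /\ cone_le C (b^-1 *: x) y /\ cone_le C y (b *: x)].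

Lemma thomE x y : thompson C x y = ln (inf (Sb x y)).
Proof. by []. Qed.

Lemma aux_small x y : interior C x ->
  exists2 t : R, 0 < t & forall s, 0 < s -> s <= t -> C (x - s *: y).
Proof.
move=> /int_ball [r r0 Hr].
have ny : 0 < `|y| + 1 by rewrite ltr_wpDl.
exists (r / (2 * (`|y| + 1))); first by rewrite divr_gt0 // mulr_gt0.
move=> s s0 st; apply: Hr; rewrite opprB addrC subrK normrZ gtr0_norm //.
have e : r / (2 * (`|y| + 1)) * (`|y| + 1) = r / 2 by field; rewrite gt_eqF.
apply: (le_lt_trans (y := s * (`|y| + 1))); first by rewrite ler_wpM2l ?ltW //; lra.
apply: (le_lt_trans (y := r / 2)); last by lra.
by rewrite -e ler_wpM2r //; exact: ltW.
Qed.

Lemma int_S x y : interior C x -> interior C y -> exists b, Sb x y b.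
Proof.
move=> ix iy.
have [t1 t10 H1] := @aux_small x y ix.
have [t2 t20 H2] := @aux_small y x iy.
pose s := Num.min (Num.min t1 t2) 1.
have s0 : 0 < s by rewrite /s !lt_min t10 t20 ltr01.
have s1 : s <= t1 by rewrite /s !ge_min lexx.
have s2 : s <= t2 by rewrite /s !ge_min lexx orbT.
have s3 : s <= 1 by rewrite /s !ge_min lexx !orbT.
exists s^-1; split; first by rewrite invf_ge1.
split; rewrite /cone_le ?invrK; first exact: H2.
have -> : s^-1 *: x - y = s^-1 *: (x - s *: y).
  by rewrite scalerBr scalerA mulVf ?gt_eqF // scale1r.
by apply: Cscale; [rewrite invr_ge0 ltW | exact: H1].
Qed.

Lemma S_up x y b b' : C x -> Sb x y b -> b <= b' -> Sb x y b'.
Proof.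
move=> Cx [b1 [h1 h2]] bb.
have b0 : 0 < b by lra.
have b'0 : 0 < b' by lra.
split; first lra.
rewrite /cone_le in h1 h2 *; split.
- have -> : y - b'^-1 *: x = (y - b^-1 *: x) + (b^-1 - b'^-1) *: x.
    by lin2 R x y; ring.
  apply: Cadd => //; apply: Cscale => //.
  by rewrite subr_ge0 lef_pV2 ?posrE.
- have -> : b' *: x - y = (b *: x - y) + (b' - b) *: x by lin2 R x y; ring.
  by apply: Cadd => //; apply: Cscale => //; rewrite subr_ge0.
Qed.

Lemma Sb_ge1 x y : lbound (Sb x y) 1.
Proof. by move=> b [] . Qed.

Lemma thom_le x y b : Sb x y b -> thompson C x y <= ln b.
Proof.
move=> hb.
have ne : Sb x y !=set0 by exists b.
have i1 : 1 <= inf (Sb x y) by apply: lb_le_inf => //; exact: Sb_ge1.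
have ib : inf (Sb x y) <= b by apply: ge_inf => //; exists 1; exact: Sb_ge1.
rewrite thomE ler_ln // posrE; [lra | case: hb; lra].
Qed.

Lemma thom_ge0 x y : (exists b, Sb x y b) -> 0 <= thompson C x y.
Proof.
move=> ne.
have i1 : 1 <= inf (Sb x y) by apply: lb_le_inf => //; exact: Sb_ge1.
by rewrite thomE ln_ge0.
Qed.

Lemma thom_lt x y b : C x -> (exists b, Sb x y b) -> 0 < b ->
  thompson C x y < ln b -> Sb x y b.
Proof.
move=> Cx ne b0 hl.
have i1 : 1 <= inf (Sb x y) by apply: lb_le_inf => //; exact: Sb_ge1.
have ib : inf (Sb x y) < b.
  by rewrite thomE ltr_ln ?posrE // in hl; lra.
have [b1 hb1 lb1] := inf_lt ne ib.
by apply: S_up hb1 _ => //; exact: ltW.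
Qed.

Lemma thom_exp x y e : interior C x -> interior C y -> thompson C x y < e ->
  Sb x y (expR e).
Proof.
move=> ix iy h; apply: thom_lt; [exact: Cint | exact: int_S | exact: expR_gt0 |].
by rewrite expRK.
Qed.


Lemma comb_S u v x y al b : Sb u v b -> Sb x y b -> 0 <= al -> al <= 1 ->
  Sb (al *: u + (1 - al) *: x) (al *: v + (1 - al) *: y) b.
Proof.
move=> [b1 [h1 h2]] [_ [h3 h4]] a0 a1; rewrite /cone_le in h1 h2 h3 h4.
split => //; rewrite /cone_le; split.
- have -> : al *: v + (1 - al) *: y - b^-1 *: (al *: u + (1 - al) *: x) =
     al *: (v - b^-1 *: u) + (1 - al) *: (y - b^-1 *: x) by lin R u v x y; ring.
  exact: Cconv.
- have -> : b *: (al *: u + (1 - al) *: x) - (al *: v + (1 - al) *: y) =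
     al *: (b *: u - v) + (1 - al) *: (b *: x - y) by lin R u v x y; ring.
  exact: Cconv.
Qed.

Lemma oneside u v x y al b1 b2 K : 0 <= al -> al <= 1 -> b1 <= b2 -> 0 < K ->
  C (b1 *: u - v) -> C (b2 *: x - y) -> C (u - K^-1 *: (al *: u + (1 - al) *: x)) ->
  C ((b2 - al * (b2 - b1) / K) *: (al *: u + (1 - al) *: x) - (al *: v + (1 - al) *: y)).
Proof.
move=> a0 a1 bb K0 h1 h2 h3.
have -> : (b2 - al * (b2 - b1) / K) *: (al *: u + (1 - al) *: x) - (al *: v + (1 - al) *: y)
  = al*:(b1*:u - v) + (1-al)*:(b2*:x - y) + (al*(b2-b1))*:(u - K^-1 *: (al*:u + (1-al)*:x)).
  by lin R u v x y; field; rewrite gt_eqF.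
apply: Cadd; first exact: Cconv.
by apply: Cscale => //; rewrite mulr_ge0 // subr_ge0.
Qed.

Lemma tau_le_cover A d : 0 < d -> has_finite_cover C A d -> (tau C A <= d%:E)%E.
Proof. by move=> d0 hc; apply: ereal_inf_lbound; exists d. Qed.

Lemma cover_self A d : A `<=` interior C ->
  (forall x y, A x -> A y -> thompson C x y <= d) -> has_finite_cover C A d.
Proof.
move=> AI hd; exists 1%N, (fun _ => A); split => //.
by move=> a Aa; exists ord0.
Qed.

Lemma lb_cover (E : set V) x0 n (B : 'I_n -> set V) d : interior C x0 ->
  (forall i, B i `<=` interior C) -> (forall a, E a -> exists i, B i a) ->
  (forall i x y, B i x -> B i y -> thompson C x y <= d) ->
  exists2 m, 0 < m & forall u, E u -> C (u - m *: x0).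
Proof.
move=> ix0 BI Bc Bd.
have H : forall i, exists m, 0 < m /\ forall u, E u -> B i u -> C (u - m *: x0).
  move=> i; case: (pselect (exists r, E r /\ B i r)) => [[r [Er Br]] | nr]; last first.
    by exists 1; split => // u Eu Bu; exfalso; apply: nr; exists u.
  have ir := BI i r Br.
  have [b [b1 [hb _]]] := @int_S x0 r ix0 ir.
  rewrite /cone_le in hb.
  exists ((expR (d + 1))^-1 * b^-1); split.
    by rewrite mulr_gt0 // invr_gt0 ?expR_gt0 //; lra.
  move=> u Eu Bu.
  have [_ [hu _]] : Sb r u (expR (d + 1)).
    by apply: thom_exp => //; [exact: BI Bu | have := Bd i r u Br Bu; lra].
  rewrite /cone_le in hu.
  have -> : u - (expR (d + 1))^-1 * b^-1 *: x0 =
    (u - (expR (d + 1))^-1 *: r) + (expR (d + 1))^-1 *: (r - b^-1 *: x0).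
    by lin3 R u r x0; ring.
  apply: Cadd => //; apply: Cscale => //; rewrite invr_ge0 expR_ge0 //.
have [mf hmf] := choice H.
pose S := \sum_(i < n) (mf i)^-1.
have S0 : 0 <= S by apply: sumr_ge0 => i _; rewrite invr_ge0 ltW // (hmf i).1.
exists (1 + S)^-1; first by rewrite invr_gt0; lra.
move=> u Eu; have [i Bu] := Bc u Eu.
have [mi0 hi] := hmf i.
have le1 : (mf i)^-1 <= 1 + S.
  rewrite /S (bigD1 i) //=; have : 0 <= \sum_(j < n | j != i) (mf j)^-1.
    by apply: sumr_ge0 => j _; rewrite invr_ge0 ltW // (hmf j).1.
  lra.
have le2 : (1 + S)^-1 <= mf i.
  by rewrite -(invrK (mf i)) lef_pV2 ?posrE ?invr_gt0 //; lra.
have -> : u - (1 + S)^-1 *: x0 = (u - mf i *: x0) + (mf i - (1 + S)^-1) *: x0.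
  by lin2 R u x0; ring.
apply: Cadd; first exact: hi.
by apply: Cscale; [rewrite subr_ge0 | exact: Cint].
Qed.


Lemma inv_side (a b : V) (l : R) : 0 < l -> C (l *: b - a) -> C (b - l^-1 *: a).
Proof.
move=> l0 h; have -> : b - l^-1 *: a = l^-1 *: (l *: b - a).
  by lin2 R a b; field; rewrite gt_eqF.
by apply: Cscale => //; rewrite invr_ge0 ltW.
Qed.

Lemma mul_side (a b : V) (l : R) : 0 < l -> C (b - l^-1 *: a) -> C (l *: b - a).
Proof.
move=> l0 h; have -> : l *: b - a = l *: (b - l^-1 *: a).
  by lin2 R a b; field; rewrite gt_eqF.
by apply: Cscale => //; rewrite ltW.
Qed.

End Aux.
Arguments Sb {R V}.

Theorem corollary2p6 (R : realType) (V : completeNormedModType R) (C : set V) :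
  closed_cone C -> normal_cone C -> (exists x, interior C x) ->
  forall f : V -> V, tau_condensing C (interior C) f ->
  forall alpha : R, 0 < alpha -> alpha < 1 ->
  tau_condensing C (interior C) (fun x => alpha *: f x + (1 - alpha) *: x).
Proof.
move=> hC _ _ f [fI fc fcond] al al0 al1.
split.
- by move=> x ix; apply: int_conv => //; [exact: fI | exact: ltW].
- move=> x ix e e0.
  have [del del0 hdel] := fc x ix e e0.
  exists (Num.min del e); first by rewrite lt_min del0 e0.
  move=> y iy hxy.
  have h1 : thompson C x y < del by move: hxy; rewrite lt_min => /andP[].
  have h2 : thompson C x y < e by move: hxy; rewrite lt_min => /andP[].
  have h3 := hdel y iy h1.
  have ifx := fI x ix; have ify := fI y iy.
  have g1 : 0 <= thompson C (f x) (f y) by apply: thom_ge0; exact: int_S.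
  have g2 : 0 <= thompson C x y by apply: thom_ge0; exact: int_S.
  pose m := Num.max (thompson C (f x) (f y)) (thompson C x y).
  have hm1 : thompson C (f x) (f y) <= m by rewrite /m le_max lexx.
  have hm2 : thompson C x y <= m by rewrite /m le_max lexx orbT.
  have me : m < e by rewrite /m gt_max h3 h2.
  have S1 : Sb C (f x) (f y) (expR ((m + e) / 2)).
    by apply: thom_exp => //; lra.
  have S2 : Sb C x y (expR ((m + e) / 2)).
    by apply: thom_exp => //; lra.
  have S3 : Sb C (al *: f x + (1 - al) *: x) (al *: f y + (1 - al) *: y) (expR ((m + e) / 2)).
    by apply: comb_S => //; lra.
  have := @thom_le R V C _ _ _ S3.
  rewrite expRK => h; apply: (le_lt_trans h); lra.
- move=> A AI [M hM] tA.
  have hfA := fcond A AI (ex_intro _ M hM) tA.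
  have tle : (tau C A <= (`|M| + 1)%:E)%E.
    apply: tau_le_cover; first by rewrite ltr_wpDl.
    apply: cover_self => // x y Ax Ay; have := hM x y Ax Ay; have := ler_norm M; lra.
  have [t Et] : exists t, tau C A = t%:E.
    by move: tA tle; case: (tau C A) => [t _ _| |] //=; exists t.
  rewrite Et in tA hfA; rewrite Et.
  have t0 : 0 < t by rewrite lte_fin in tA.
  have [_ [d1 [d10 cov1] <-] d1t] := ereal_inf_lt hfA.
  rewrite lte_fin in d1t.
  case: (pselect (exists x0, A x0)) => [[x0 Ax0]|nA]; last first.
    have : (tau C A <= (t / 2)%:E)%E.
      apply: tau_le_cover; first by lra.
      by apply: cover_self => // x y Ax; exfalso; apply: nA; exists x.
    by rewrite Et lee_fin => h; exfalso; lra.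
  have ix0 := AI x0 Ax0.
  have [n1 [B1 [B1I B1c B1d]]] := cov1.
  have [m m0 hm] := @lb_cover R V C hC (f @` A) x0 n1 B1 d1 ix0 B1I B1c B1d.
  pose ga := expR (M + 1).
  have ga0 : 0 < ga by apply: expR_gt0.
  have hx : forall x, A x -> C (x0 - ga^-1 *: x).
    move=> x Ax; have [_ [_ h]] : Sb C x0 x ga.
      by apply: thom_exp => //; [exact: AI | have := hM x0 x Ax0 Ax; lra].
    by apply: inv_side.
  pose mm := m / ga.
  have mm0 : 0 < mm by rewrite divr_gt0.
  have hux : forall u x, (f @` A) u -> A x -> C (u - mm *: x).
    move=> u x fu Ax.
    have -> : u - mm *: x = (u - m *: x0) + m *: (x0 - ga^-1 *: x).
      by rewrite /mm; lin3 R u x0 x; ring.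
    by apply: (@Cadd R V C hC); [exact: hm | apply: (@Cscale R V C hC); [exact: ltW | exact: hx]].
  pose K := al + (1 - al) / mm.
  have K1 : al <= K by rewrite /K lerDl divr_ge0 // ?subr_ge0 ltW.
  have K0 : 0 < K by lra.
  have huw : forall u x, (f @` A) u -> A x ->
      C (u - K^-1 *: (al *: u + (1 - al) *: x)).
    move=> u x fu Ax.
    have -> : u - K^-1 *: (al *: u + (1 - al) *: x) =
       (K^-1 * ((1 - al) / mm)) *: (u - mm *: x).
      have am : al * mm + (1 - al) != 0 by rewrite gt_eqF //; have := mulr_gt0 al0 mm0; lra.
      by lin2 R u x; rewrite /K; field; rewrite (gt_eqF mm0) /= am.
    apply: (@Cscale R V C hC); last exact: hux.
    have := ltW mm0; have := ltW K0; move=> h1 h2.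
    rewrite mulr_ge0 //; first by rewrite invr_ge0.
    by rewrite divr_ge0 //; lra.
  pose c := al / K.
  have c0 : 0 < c by rewrite divr_gt0.
  have c1 : c <= 1 by rewrite /c ler_pdivrMr // mul1r.
  pose s := (d1 + t) / 2.
  pose b1 := expR s.
  pose et := expR t.
  pose b2 := et + c * (et - b1) / 2.
  pose lam := (1 - c) * b2 + c * b1.
  have hb1 : b1 < et by rewrite ltr_expR /s; lra.
  have hb11 : 1 < b1 by rewrite expR_gt1 /s; lra.
  have p : 0 < c * (et - b1) by rewrite mulr_gt0 // subr_gt0.
  have hb2 : et < b2 by rewrite /b2; lra.
  have hlam : lam < et by rewrite /lam /b2; nra.
  have hlam1 : 1 < lam by rewrite /lam; nra.
  pose D := ln lam.
  have D0 : 0 < D by apply: ln_gt0.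
  have Dt : D < t.
    rewrite /D -[t]expRK ltr_ln ?posrE ?expR_gt0 -/et //; lra.
  have tb2 : (t%:E < (ln b2)%:E)%E.
    by rewrite lte_fin -ltr_expR lnK // posrE; lra.
  rewrite -Et in tb2.
  have [_ [d2 [d20 cov2] <-] d2l] := ereal_inf_lt tb2.
  rewrite lte_fin in d2l.
  have [n2 [B2 [B2I B2c B2d]]] := cov2.
  apply: (le_lt_trans (y := D%:E)); last by rewrite lte_fin.
  apply: tau_le_cover => //.
  exists #|{: ('I_n1 * 'I_n2)%type}|, (fun k => [set z | exists u x,
     [/\ B1 (enum_val k).1 u, (f @` A) u, B2 (enum_val k).2 x, A x &
         z = al *: u + (1 - al) *: x]]).
  split.
  + move=> k z /= [u [x [Bu fu Bx Ax ->]]].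
    by apply: int_conv => //; [exact: B1I Bu | exact: AI | exact: ltW].
  + move=> z [a Aa <-].
    have fa : (f @` A) (f a) by exists a.
    have [i Bi] := B1c (f a) fa.
    have [j Bj] := B2c a Aa.
    exists (enum_rank (i, j)) => /=; rewrite enum_rankK /=.
    by exists (f a), a; split.
  + move=> k z z' /= [u [x [Bu fu Bx Ax ->]]] [v [y [Bv fv By Ay ->]]].
    have [_ [h1 h2]] : Sb C u v b1.
      apply: thom_exp => //; [exact: B1I Bu | exact: B1I Bv |].
      by have := B1d _ _ _ Bu Bv; rewrite /s; lra.
    have : Sb C x y (expR (ln b2)).
      apply: thom_exp => //; [exact: AI | exact: AI |].
      by have := B2d _ _ _ Bx By; lra.
    rewrite lnK ?posrE; last lra.
    move=> [_ [h3 h4]].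
    rewrite /cone_le in h1 h2 h3 h4.
    have h1' : C (b1 *: v - u) by apply: mul_side => //; lra.
    have h3' : C (b2 *: y - x) by apply: mul_side => //; lra.
    have lamE : lam = b2 - al * (b2 - b1) / K.
      by rewrite /lam /c; field; rewrite gt_eqF.
    have o1 : C (lam *: (al *: u + (1 - al) *: x) - (al *: v + (1 - al) *: y)).
      by rewrite lamE; apply: oneside => //; [lra | lra | lra | exact: huw].
    have o2 : C (lam *: (al *: v + (1 - al) *: y) - (al *: u + (1 - al) *: x)).
      by rewrite lamE; apply: oneside => //; [lra | lra | lra | exact: huw].
    apply: (@thom_le R V C).
    split; first lra.
    split; rewrite /cone_le //.
    by apply: inv_side => //; lra.
Qed.
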